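(* There is a constant $c>0$ such that for every formula $\phi$ in $\mathsf F(\mathrm{LTL}[\mathsf O])$ there is a deterministic Büchi automaton for $\mathcal L^\omega(\phi)$ with at most $2^{c\cdot\mathrm{size}(\phi)}$ states.
   Context: Let $AP$ be a finite set of atomic propositions and $\Sigma=2^{AP}$. Formulae of $\mathrm{LTL}[\mathsf O]$ are built from literals $p,\neg p$ ($p\in AP$) with $\land,\lor$ and the operator $\mathsf O$; $\mathsf F(\mathrm{LTL}[\mathsf O])$ consists of formulae $\mathsf F(\alpha)$ with $\alpha\in\mathrm{LTL}[\mathsf O]$. Semantics on infinite traces $\sigma\in\Sigma^\omega$ at positions $i\in\mathbb N$: literals/Booleans as usual; $\mathsf F\phi$: $\phi$ holds at some $j\ge i$; $\mathsf O\phi$: $\phi$ holds at some $0\le j\le i$; $\mathcal L^\omega(\phi)=\{\sigma\in\Sigma^\omega:\sigma,0\models\phi\}$. Size: literals 1, unary operators add 1, binary connectives sum plus 1. A deterministic Büchi automaton is $(Q,\Sigma,\delta,q_0,F)$ with finite $Q$, total $\delta:Q\times\Sigma\to Q$, initial $q_0$, accepting $F\subseteq Q$; it accepts $\sigma\in\Sigma^\omega$ iff its run visits $F$ infinitely often. *)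

(* Defs.v *)
From mathcomp Require Import all_boot.
From Stdlib Require Import Reals.
Set Implicit Arguments. Unset Strict Implicit. Unset Printing Implicit Defensive.

Definition letter (AP : finType) := {set AP}.
Definition trace (AP : finType) := nat -> letter AP.

Inductive ltlO (AP : finType) : Type :=
| PLit : AP -> ltlO AP
| NLit : AP -> ltlO AP
| And : ltlO AP -> ltlO AP -> ltlO AP
| Or : ltlO AP -> ltlO AP -> ltlO AP
| Once : ltlO AP -> ltlO AP.

Inductive fltlO (AP : finType) : Type :=
| Fin : ltlO AP -> fltlO AP.

Fixpoint sat_ltlO (AP : finType) (a : ltlO AP) (s : trace AP) (i : nat) : Prop :=
  match a with
  | PLit p => p \in s i
  | NLit p => p \notin s i
  | And a1 a2 => sat_ltlO a1 s i /\ sat_ltlO a2 s i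
  | Or a1 a2 => sat_ltlO a1 s i \/ sat_ltlO a2 s i
  | Once a1 => exists j, j <= i /\ sat_ltlO a1 s j
  end.

Definition sat_fltlO (AP : finType) (f : fltlO AP) (s : trace AP) (i : nat) : Prop :=
  match f with Fin a => exists j, i <= j /\ sat_ltlO a s j end.

Definition lang (AP : finType) (f : fltlO AP) : trace AP -> Prop :=
  fun s => sat_fltlO f s 0.

Fixpoint size_ltlO (AP : finType) (a : ltlO AP) : nat :=
  match a with
  | PLit _ | NLit _ => 1
  | And a1 a2 | Or a1 a2 => size_ltlO a1 + size_ltlO a2 + 1
  | Once a1 => size_ltlO a1 + 1
  end.

Definition size_fltlO (AP : finType) (f : fltlO AP) : nat :=
  match f with Fin a => size_ltlO a + 1 end.

Record DBA (AP : finType) := mkDBA {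
  dba_state : finType;
  dba_delta : dba_state -> letter AP -> dba_state;
  dba_init : dba_state;
  dba_acc : pred dba_state
}.

Fixpoint dba_run (AP : finType) (A : DBA AP) (s : trace AP) (n : nat) : dba_state A :=
  match n with
  | 0 => @dba_init AP A
  | n'.+1 => @dba_delta AP A (dba_run A s n') (s n')
  end.

Definition dba_accepts (AP : finType) (A : DBA AP) (s : trace AP) : Prop :=
  forall n, exists m, n <= m /\ @dba_acc AP A (dba_run A s m).

(* Main.v *)
Require Import Defs.
From mathcomp Require Import all_boot.
From Stdlib Require Import Reals.

Fixpoint memT (AP : finType) (a : ltlO AP) : finType :=
  match a with
  | PLit _ | NLit _ => unit
  | And a1 a2 | Or a1 a2 => (memT AP a1 * memT AP a2)%type
  | Once a1 => (bool * memT AP a1)%type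
  end.

Fixpoint minit (AP : finType) (a : ltlO AP) : memT AP a :=
  match a return memT AP a with
  | PLit _ | NLit _ => tt
  | And a1 a2 | Or a1 a2 => (minit AP a1, minit AP a2)
  | Once a1 => (false, minit AP a1)
  end.

Fixpoint step (AP : finType) (a : ltlO AP) : memT AP a -> letter AP -> memT AP a * bool :=
  match a return memT AP a -> letter AP -> memT AP a * bool with
  | PLit p => fun m x => (m, p \in x)
  | NLit p => fun m x => (m, p \notin x)
  | And a1 a2 => fun m x =>
      let r1 := step AP a1 m.1 x in let r2 := step AP a2 m.2 x in
      ((r1.1, r2.1), r1.2 && r2.2)
  | Or a1 a2 => fun m x =>
      let r1 := step AP a1 m.1 x in let r2 := step AP a2 m.2 x in
      ((r1.1, r2.1), r1.2 || r2.2)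
  | Once a1 => fun m x =>
      let r1 := step AP a1 m.2 x in
      ((m.1 || r1.2, r1.1), m.1 || r1.2)
  end.

Fixpoint good (AP : finType) (a : ltlO AP) (s : trace AP) (n : nat) : memT AP a -> Prop :=
  match a return memT AP a -> Prop with
  | PLit _ | NLit _ => fun _ => True
  | And a1 a2 | Or a1 a2 => fun m => good AP a1 s n m.1 /\ good AP a2 s n m.2
  | Once a1 => fun m => (m.1 = true <-> exists j, j < n /\ sat_ltlO a1 s j) /\ good AP a1 s n m.2
  end.

Lemma good_init (AP : finType) (a : ltlO AP) s : good AP a s 0 (minit AP a).
Proof.
elim: a => [p|p|a1 H1 a2 H2|a1 H1 a2 H2|a1 H1] //=; try by split.
split=> //; split=> // [[j [] ]] //.
Qed.

Lemma good_step (AP : finType) (a : ltlO AP) s n m :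
  good AP a s n m ->
  (((step AP a m (s n)).2 : Prop) <-> sat_ltlO a s n) /\ good AP a s n.+1 (step AP a m (s n)).1.
Proof.
elim: a m => [p|p|a1 H1 a2 H2|a1 H1 a2 H2|a1 H1] m /=.
- by [].
- by move=> _; split=> //; split=> /negP.
- case=> g1 g2; have [E1 G1] := H1 _ g1; have [E2 G2] := H2 _ g2.
  split=> //; rewrite -E1 -E2; split; first by move/andP.
  by case=> -> ->.
- case=> g1 g2; have [E1 G1] := H1 _ g1; have [E2 G2] := H2 _ g2.
  split=> //; rewrite -E1 -E2; split; first by case/orP; [left|right].
  by case=> ->; rewrite ?orbT.
- case=> [[Ea Eb] g1]; have [E1 G1] := H1 _ g1.
  have key : (m.1 || (step AP a1 m.2 (s n)).2) = true <-> exists j, j <= n /\ sat_ltlO a1 s j.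
    split.
    + case/orP => [/Ea [j [Hj Sj]]|/E1 S]; first by exists j; split=> //; apply: ltnW.
      by exists n.
    + case=> j [Hj Sj]; rewrite leq_eqVlt in Hj; case/orP: Hj => [/eqP Ej|Hj].
      * by subst j; apply/orP; right; apply/E1.
      * by rewrite Eb //; exists j.
  by split=> //; split.
Qed.

Section Aut.
Variable AP : finType.
Variable a : ltlO AP.

Definition Sty : finType := (bool * memT AP a)%type.
Definition delta (q : Sty) (x : letter AP) : Sty :=
  let r := step AP a q.2 x in (q.1 || r.2, r.1).
Definition autA : DBA AP := @mkDBA AP Sty delta (false, minit AP a) (fun q : Sty => q.1).

Lemma run_inv s n :
  good AP a s n (dba_run autA s n).2 /\
  ((dba_run autA s n).1 = true <-> exists j, j < n /\ sat_ltlO a s j).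
Proof.
elim: n => [|n [G E]] /=.
  by split; [apply: good_init|split=> // [[j []]]].
have [E1 G1] := @good_step _ _ _ _ _ G.
rewrite /delta /=; split=> //; split.
- case/orP => [/E [j [Hj Sj]]|/E1 S]; first by exists j; split=> //; apply: ltnW.
  by exists n.
- case=> j [Hj Sj]; rewrite ltnS leq_eqVlt in Hj; case/orP: Hj => [/eqP Ej|Hj].
  + by subst j; apply/orP; right; apply/E1.
  + by rewrite (proj2 E) //; exists j.
Qed.

Lemma autA_correct s : dba_accepts autA s <-> lang (Fin a) s.
Proof.
rewrite /dba_accepts /lang /=; split.
- move=> /(_ 0) [m [_ Am]]. have [_ E] := run_inv s m.
  have [j [_ Sj]] := proj1 E Am. by exists j.
- case=> j [_ Sj] n; exists (maxn n j.+1); split; first exact: leq_maxl.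
  have [_ E] := run_inv s (maxn n j.+1); apply/E; exists j; split=> //.
  exact: leq_maxr.
Qed.

End Aut.

Lemma card_memT (AP : finType) (a : ltlO AP) : #|memT AP a| <= expn 2 (size_ltlO a).
Proof.
elim: a => [p|p|a1 H1 a2 H2|a1 H1 a2 H2|a1 H1] /=; rewrite ?card_prod ?card_unit ?card_bool //.
- rewrite addn1 expnS expnD; apply: leq_trans (leq_mul H1 H2) _; exact: leq_pmull.
- rewrite addn1 expnS expnD; apply: leq_trans (leq_mul H1 H2) _; exact: leq_pmull.
- by rewrite addn1 expnS leq_mul2l.
Qed.

Theorem lemma8 (AP : finType) :
  exists c : R, (0 < c)%R /\
    forall phi : fltlO AP,
      exists A : DBA AP,
        (forall s : trace AP, dba_accepts A s <-> lang phi s) /\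
        (INR #|@dba_state AP A| <= Rpower 2 (c * INR (size_fltlO phi)))%R.
Proof.
exists 1%R; split; first exact: Rlt_0_1.
case=> a; exists (@autA AP a); split; first exact: (@autA_correct AP a).
rewrite Rmult_1_l Rpower_pow; last by apply: Rlt_0_2.
rewrite -(INR_IZR_INZ 2) -pow_INR; apply: le_INR; apply/leP.
have pw : forall n, Nat.pow 2 n = expn 2 n by elim=> //= n ->; rewrite expnS.
rewrite pw /= card_prod card_bool addn1 expnS leq_mul2l; exact: card_memT.
Qed.
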